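(* Let $K\subset\mathbb{R}$ be a real cubic number field with norm map $N=N_{K/\mathbb{Q}}$. Let $p,q$ be positive integers with $\gcd(p,q)=1$ and $p\not\equiv 0 \pmod 3$. Then for all $\alpha,\beta\in K\setminus\mathbb{Q}$ with $\alpha,\beta>0$, \[ \frac{|N(\alpha)|}{\alpha^{p/q}}=\frac{|N(\beta)|}{\beta^{p/q}}\quad\text{implies}\quad \alpha=\beta . \]
   Context: Here $\alpha^{p/q}$ denotes the positive real $(p/q)$-th power of the positive real number $\alpha$. *)

(* Defs.v *)
From HB Require Import structures.
From mathcomp Require Import all_boot all_order all_algebra.
From mathcomp Require Import all_classical all_reals all_analysis.
Set Implicit Arguments. Unset Strict Implicit. Unset Printing Implicit Defensive.
Import Order.TTheory GRing.Theory Num.Theory.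
Local Open Scope ring_scope.

Definition is_subfield (R : realType) (K : R -> Prop) : Prop :=
  [/\ K 1,
      (forall x y, K x -> K y -> K (x - y)),
      (forall x y, K x -> K y -> K (x * y)) &
      (forall x, K x -> x != 0 -> K x^-1)].

Definition is_rational (R : realType) (x : R) : Prop := exists r : rat, x = ratr r.

Definition is_Qbasis3 (R : realType) (K : R -> Prop) (e : 'I_3 -> R) : Prop :=
  [/\ (forall i, K (e i)),
      (forall x, K x -> exists c : 'I_3 -> rat, x = \sum_(i < 3) ratr (c i) * e i) &
      (forall c : 'I_3 -> rat, \sum_(i < 3) ratr (c i) * e i = 0 -> forall i, c i = 0)].

Definition real_cubic_field (R : realType) (K : R -> Prop) : Prop :=
  is_subfield K /\ exists e, is_Qbasis3 K e.

(* M is the (rational) matrix of multiplication by a in the basis e: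
   a * e_i = sum_j M_ij e_j.  The norm N_{K/Q}(a) is det M (independent of e). *)
Definition mult_matrix (R : realType) (e : 'I_3 -> R) (a : R) (M : 'M[rat]_3) : Prop :=
  forall i : 'I_3, a * e i = \sum_(j < 3) ratr (M i j) * e j.

Definition is_norm (R : realType) (K : R -> Prop) (a : R) (n : rat) : Prop :=
  exists e M, is_Qbasis3 K e /\ mult_matrix e a M /\ n = \det M.

(* Main.v *)
Require Import Defs.
From HB Require Import structures.
From mathcomp Require Import all_boot all_order all_algebra.
From mathcomp Require Import all_classical all_reals all_analysis.
From mathcomp Require Import ring.
Import Order.TTheory GRing.Theory Num.Theory.
Set Implicit Arguments. Unset Strict Implicit.
Local Open Scope ring_scope.

Lemma rat_aux_lt (a b : rat) p n : 0 < a -> 0 < b -> (p < n)%N ->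
  a ^+ n * b ^+ p = b ^+ n * a ^+ p -> a = b.
Proof.
move=> a0 b0 lt E.
have hn : n = (p + (n - p))%N by rewrite subnKC // ltnW.
set m := (n - p)%N in hn; have m0 : (0 < m)%N by rewrite subn_gt0.
move: E; rewrite hn !exprD => E.
have E2 : a ^+ m * (a ^+ p * b ^+ p) = b ^+ m * (a ^+ p * b ^+ p).
  by transitivity (a ^+ p * a ^+ m * b ^+ p); [ring | rewrite E; ring].
move/mulIf: E2 => E3.
have /E3 : a ^+ p * b ^+ p != 0 by rewrite mulf_neq0 // expf_neq0 // gt_eqF.
by move/eqP; rewrite eqrXn2 ?ltW // => /eqP ->.
Qed.

Lemma rat_aux (a b : rat) p q : 0 < a -> 0 < b -> (p != q * 3)%N ->
  (a ^+ q) ^+ 3 * b ^+ p = (b ^+ q) ^+ 3 * a ^+ p -> a = b.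
Proof.
move=> a0 b0 pn; rewrite -!exprM => E.
case: (ltngtP p (q * 3)) => h.
- exact: (rat_aux_lt a0 b0 h E).
- apply/esym; apply: (rat_aux_lt b0 a0 h); by rewrite [LHS]mulrC E mulrC.
- by rewrite h eqxx in pn.
Qed.
Section H.
Variable R : realType.
Implicit Types (e f : 'I_3 -> R).

Lemma comb_mx m (v : 'I_m -> R) (w u : 'I_3 -> R) (X : 'M[rat]_(m,3)) (Y : 'M[rat]_3) :
  (forall i, v i = \sum_(j < 3) ratr (X i j) * w j) ->
  (forall j, w j = \sum_(k < 3) ratr (Y j k) * u k) ->
  forall i, v i = \sum_(k < 3) ratr ((X *m Y) i k) * u k.
Proof.
move=> H1 H2 i; rewrite H1.
under eq_bigr => j _ do rewrite H2 mulr_sumr.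
rewrite exchange_big /=; apply: eq_bigr => k _.
rewrite mxE rmorph_sum mulr_suml; apply: eq_bigr => j _.
by rewrite rmorphM mulrA.
Qed.

Lemma coord_uniq (K : R -> Prop) e m (X Y : 'M[rat]_(m,3)) : is_Qbasis3 K e ->
  (forall i, \sum_(k < 3) ratr (X i k) * e k = \sum_(k < 3) ratr (Y i k) * e k) -> X = Y.
Proof.
case=> _ _ Hind H; apply/matrixP => i k.
apply/eqP; rewrite -subr_eq0; apply/eqP.
apply: (Hind (fun k => X i k - Y i k)).
under eq_bigr => j _ do rewrite rmorphB mulrBl.
by rewrite sumrB H subrr.
Qed.

Lemma mm_unique (K : R -> Prop) e x A B : is_Qbasis3 K e ->
  mult_matrix e x A -> mult_matrix e x B -> A = B.
Proof. by move=> He HA HB; apply: (coord_uniq He) => i; rewrite -HA -HB. Qed.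

Lemma mm_mul e x y A B : mult_matrix e x A -> mult_matrix e y B ->
  mult_matrix e (x * y) (B *m A).
Proof.
move=> HA HB; apply: (comb_mx (w := fun j => x * e j)) => // i.
rewrite -mulrA HB mulr_sumr; apply: eq_bigr => j _; by rewrite mulrCA.
Qed.

Lemma mm_exp e x (A : 'M[rat]_3) n : mult_matrix e x A -> mult_matrix e (x ^+ n) (A ^+ n).
Proof.
move=> HA; elim: n => [|n IH].
  move=> i; rewrite !expr0 mul1r (bigD1 i) //= big1 ?addr0.
    by rewrite mxE eqxx rmorph1 mul1r.
  by move=> j /negbTE ji; rewrite mxE eq_sym ji rmorph0 mul0r.
by rewrite exprS exprSr -mulmxE; apply: mm_mul.
Qed.

Lemma mm_scal e x (A : 'M[rat]_3) c : mult_matrix e x A -> mult_matrix e (ratr c * x) (c *: A).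
Proof.
move=> HA i; rewrite -mulrA HA mulr_sumr; apply: eq_bigr => j _.
by rewrite mxE rmorphM mulrA.
Qed.

Lemma detX (A : 'M[rat]_3) n : \det (A ^+ n) = \det A ^+ n.
Proof.
elim: n => [|n IH]; first by rewrite !expr0 det1.
by rewrite exprS -mulmxE det_mulmx IH exprS.
Qed.

Lemma mm_exists (K : R -> Prop) e x : is_subfield K -> is_Qbasis3 K e -> K x ->
  exists A, mult_matrix e x A.
Proof.
move=> [_ _ Hm _] [He Hsp _] Kx.
have : forall i : 'I_3, exists c : 'I_3 -> rat, x * e i = \sum_(j < 3) ratr (c j) * e j.
  by move=> i; apply: Hsp; apply: Hm.
move=> /choice [c Hc]; exists (\matrix_(i, j) c i j) => i.
by rewrite Hc; apply: eq_bigr => j _; rewrite mxE.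
Qed.

Lemma det_nz (K : R -> Prop) e x A : is_Qbasis3 K e -> mult_matrix e x A -> x != 0 ->
  \det A != 0.
Proof.
move=> He HA x0; apply/negP => /det0P [v v0 vA].
case: (He) => _ _ Hind.
pose y := \sum_(i < 3) ratr (v 0 i) * e i.
have Hxy : forall i : 'I_1, x * y = \sum_(k < 3) ratr ((v *m A) i k) * e k.
  apply: (comb_mx (w := fun j => x * e j) (v := fun _ => x * y)) => //= j.
  rewrite /y mulr_sumr; apply: eq_bigr => k _.
  by rewrite (ord1 j) mulrCA.
have : x * y = 0 by rewrite (Hxy 0) vA; apply: big1 => k _; rewrite mxE rmorph0 mul0r.
move/eqP; rewrite mulf_eq0 (negbTE x0) /= => /eqP y0.
move/negP: v0; apply; apply/eqP/matrixP => i k; rewrite (ord1 i) mxE.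
exact: (Hind (fun k => v 0 k) y0 k).
Qed.

Lemma det_inv (K : R -> Prop) e f x A B : is_Qbasis3 K e -> is_Qbasis3 K f ->
  mult_matrix e x A -> mult_matrix f x B -> \det A = \det B.
Proof.
move=> He Hf HA HB.
have [_ Hspe _] := He; have [Kf Hspf _] := Hf; have [Ke _ _] := He.
have /choice [P HP] : forall i : 'I_3, exists c : 'I_3 -> rat,
   f i = \sum_(j < 3) ratr (c j) * e j by move=> i; apply: Hspe.
have /choice [Q HQ] : forall i : 'I_3, exists c : 'I_3 -> rat,
   e i = \sum_(j < 3) ratr (c j) * f j by move=> i; apply: Hspf.
pose PM := \matrix_(i, j) P i j; pose QM := \matrix_(i, j) Q i j.
have HP' : forall i, f i = \sum_(j < 3) ratr (PM i j) * e j.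
  by move=> i; rewrite HP; apply: eq_bigr => j _; rewrite mxE.
have HQ' : forall i, e i = \sum_(j < 3) ratr (QM i j) * f j.
  by move=> i; rewrite HQ; apply: eq_bigr => j _; rewrite mxE.
have PQ : PM *m QM = 1%:M.
  apply: (coord_uniq Hf) => i.
  rewrite -(comb_mx HP' HQ') (bigD1 i) //= big1 ?addr0.
    by rewrite mxE eqxx rmorph1 mul1r.
  by move=> j /negbTE ji; rewrite mxE eq_sym ji rmorph0 mul0r.
have dP : \det PM != 0.
  by apply/eqP => d0; move: (f_equal determinant PQ); rewrite det_mulmx d0 mul0r det1 => /eqP; rewrite eq_sym oner_eq0.
have E : PM *m A = B *m PM.
  apply: (coord_uniq He) => i.
  have h1 := comb_mx (v := fun i => x * f i) (w := fun j => x * e j) (X := PM) (Y := A).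
  have h2 := comb_mx (v := fun i => x * f i) (w := f) (X := B) (Y := PM).
  rewrite -h1 // -?h2 //.
  by move=> j; rewrite HP' mulr_sumr; apply: eq_bigr => k _; rewrite mulrCA.
move: (f_equal determinant E); rewrite !det_mulmx mulrC => /mulIf; apply; exact: dP.
Qed.

End H.

Theorem lemma2p1 (R : realType) (K : R -> Prop) (p q : nat) :
  real_cubic_field K ->
  (0 < p)%N -> (0 < q)%N -> coprime p q -> (p %% 3 != 0)%N ->
  forall (alpha beta : R) (Na Nb : rat),
    K alpha -> K beta -> ~ is_rational alpha -> ~ is_rational beta ->
    0 < alpha -> 0 < beta ->
    is_norm K alpha Na -> is_norm K beta Nb ->
    `|ratr Na| / alpha `^ (p%:R / q%:R) = `|ratr Nb| / beta `^ (p%:R / q%:R) ->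
    alpha = beta.
Proof.
move=> [HK _] p0 q0 _ p3 al be Na Nb Kal Kbe _ _ al0 be0
  [e [A [He [HA ->]]]] [f [B [Hf [HB ->]]]] Heq.
have [B' HB'] := mm_exists HK He Kbe.
have dB : \det B' = \det B := det_inv He Hf HB' HB.
have bnz : \det B != 0 := det_nz Hf HB (lt0r_neq0 be0).
set s := (p%:R / q%:R : R) in Heq.
set a := `|\det A|; set b := `|\det B|.
have b0 : 0 < b by rewrite normr_gt0.
have sa := powR_gt0 s al0; have sb := powR_gt0 s be0.
have E1 : ratr a * be `^ s = ratr b * al `^ s.
  rewrite /a /b !ratr_norm.
  move: Heq => /(congr1 (fun t => t * al `^ s * be `^ s)).
  by rewrite divfK ?gt_eqF // (mulrAC _ (al `^ s)) divfK ?gt_eqF // mulrC.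
have powq : forall t : R, 0 < t -> (t `^ s) ^+ q = t ^+ p.
  move=> t t0; rewrite -powR_mulrn ?powR_ge0 // -powRrM /s divfK ?powR_mulrn ?ltW //.
  by rewrite pnatr_eq0 -lt0n.
have E2 : ratr (a ^+ q) * be ^+ p = ratr (b ^+ q) * al ^+ p.
  by rewrite !rmorphXn -!powq // -!exprMn E1.
have M1 := mm_scal (a ^+ q) (mm_exp p HB').
have M2 := mm_scal (b ^+ q) (mm_exp p HA).
rewrite E2 in M1.
have EM := mm_unique He M1 M2.
have D := congr1 determinant EM; rewrite !detZ !detX dB in D.
have D' := congr1 Num.norm D; rewrite !normrM !normrX !normr_id -/a -/b in D'.
have a0 : 0 < a.
  rewrite lt_def normr_ge0 andbT; apply/eqP => a0.
  move: E2; rewrite a0 expr0n gtn_eqF // rmorph0 mul0r => /esym/eqP.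
  apply/negP; rewrite mulf_neq0 // ?fmorph_eq0 expf_neq0 // lt0r_neq0 //.
have ab : a = b.
  apply: (rat_aux a0 b0 _ D').
  apply/eqP => h; move: p3; by rewrite h modnMl.
have hb : ratr (b ^+ q) != 0 :> R by rewrite fmorph_eq0 expf_neq0 // lt0r_neq0.
by move: E2; rewrite ab => /(mulfI hb)/eqP; rewrite eqrXn2 ?(ltW al0) ?(ltW be0) // => /eqP ->.
Qed.
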